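(* There exists a frameless $2$-coloring of the infinite plane lattice $\mathbb{Z}\times\mathbb{Z}$; that is, there is a map $f:\mathbb{Z}\times\mathbb{Z}\to\Delta$ with $|\Delta|=2$ such that there do not exist integers $m,n$ and integers $p,q\ge 1$ with $f(m,n+i)=f(m+p,n+i)$ for all $0\le i\le q$ and $f(m+j,n)=f(m+j,n+q)$ for all $0\le j\le p$.
   Context: A coloring of $\mathbb{Z}\times\mathbb{Z}$ is a map into a finite set $\Delta$ of colors; a $k$-coloring uses $|\Delta|=k$. A picture frame in a coloring $f$ is a finite rectangular block $\{m,\dots,m+p\}\times\{n,\dots,n+q\}$ with $p,q\ge1$ whose first and last rows agree and whose first and last columns agree, i.e. $f(m,n+i)=f(m+p,n+i)$ for $0\le i\le q$ and $f(m+j,n)=f(m+j,n+q)$ for $0\le j\le p$. A coloring is frameless if it contains no picture frame. *)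

(* Defs.v *)
From Stdlib Require Import ZArith.
Open Scope Z_scope.

Definition picture_frame {Delta : Type} (f : Z -> Z -> Delta) (m n p q : Z) : Prop :=
  1 <= p /\ 1 <= q /\
  (forall i, 0 <= i <= q -> f m (n + i) = f (m + p) (n + i)) /\
  (forall j, 0 <= j <= p -> f (m + j) n = f (m + j) (n + q)).

Definition frameless {Delta : Type} (f : Z -> Z -> Delta) : Prop :=
  ~ exists m n p q, picture_frame f m n p q.

(* Main.v *)
Require Import Defs.
From Stdlib Require Import ZArith Lia.

Fixpoint tp (p : positive) : bool :=
  match p with xH => true | xO q => tp q | xI q => negb (tp q) end.
Definition t (z : Z) : bool := match z with Zpos p => tp p | _ => false end.

Lemma t_even z : t (2 * z) = t z.
Proof. destruct z; reflexivity. Qed.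

Lemma t_odd z : 0 <= z -> t (2 * z + 1) = negb (t z).
Proof. intros H; destruct z; try reflexivity; lia. Qed.

Lemma t_pair y : 0 <= y -> Z.Even y -> t (y + 1) = negb (t y).
Proof. intros H [m ->]. rewrite t_odd, t_even by lia. reflexivity. Qed.

Lemma OF_odd s p : 0 <= s -> 1 <= p -> Z.Odd p ->
  (forall i, 0 <= i <= p -> t (s + i) = t (s + p + i)) -> False.
Proof.
  intros Hs Hp Hpo H.
  assert (alt : forall j, 0 <= j < 2 * p -> t (s + j + 1) = negb (t (s + j))).
  { intros j Hj. destruct (Z.Even_or_Odd (s + j)) as [He | Ho].
    - apply t_pair; [lia | exact He].
    - destruct (Z_le_gt_dec (j + 1) p).
      + rewrite (H j) by lia. replace (s + j + 1) with (s + (j+1)) by lia.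
        rewrite (H (j+1)) by lia.
        replace (s + p + (j + 1)) with (s + p + j + 1) by lia.
        apply t_pair; [lia|]. destruct Ho as [a Ha]; destruct Hpo as [b Hb].
        exists (a + b + 1). lia.
      + replace (s + j) with (s + p + (j - p)) by lia.
        rewrite <- (H (j - p)) by lia.
        replace (s + p + (j - p) + 1) with (s + p + (j - p + 1)) by lia.
        rewrite <- (H (j - p + 1)) by lia.
        replace (s + (j - p + 1)) with (s + (j - p) + 1) by lia.
        apply t_pair; [lia|]. destruct Ho as [a Ha]; destruct Hpo as [b Hb].
        exists (a - b). lia. }
  destruct Hpo as [r Hr].
  assert (Hn : forall n : nat, Z.of_nat n <= r ->
     t (s + 2 * Z.of_nat n) = t s /\ t (s + 2 * Z.of_nat n + 1) = negb (t s)).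
  { induction n as [|n IH]; intros Hn.
    - simpl. replace (s + 0) with s by lia. split; [reflexivity|].
      replace s with (s + 0) at 1 by lia. rewrite alt by lia.
      replace (s + 0) with s by lia. reflexivity.
    - destruct IH as [IH1 IH2]; [lia|].
      assert (E1 : t (s + 2 * Z.of_nat (S n)) = t s).
      { replace (s + 2 * Z.of_nat (S n)) with (s + (2 * Z.of_nat n + 1) + 1) by lia.
        rewrite alt by lia. replace (s + (2 * Z.of_nat n + 1)) with (s + 2 * Z.of_nat n + 1) by lia.
        rewrite IH2. apply Bool.negb_involutive. }
      split; [exact E1|].
      rewrite alt by lia. rewrite E1. reflexivity. }
  destruct (Hn (Z.to_nat r)) as [_ H2]; [lia|].
  rewrite Z2Nat.id in H2 by lia.
  specialize (H 0 ltac:(lia)). rewrite Z.add_0_r, Z.add_0_r in H.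
  replace (s + p) with (s + 2 * r + 1) in H by lia. rewrite H2 in H. destruct (t s); discriminate.
Qed.

Lemma OF_nat : forall (n : nat) p, 1 <= p <= Z.of_nat n -> forall s, 0 <= s ->
  (forall i, 0 <= i <= p -> t (s + i) = t (s + p + i)) -> False.
Proof.
  induction n as [|n IH]; intros p Hp s Hs H; [lia|].
  destruct (Z.Even_or_Odd p) as [[r Hr] | Ho].
  - destruct (Z.Even_or_Odd s) as [[a Ha] | [a Ha]].
    + apply (IH r ltac:(lia) a ltac:(lia)). intros k Hk.
      rewrite <- (t_even (a + k)), <- (t_even (a + r + k)).
      replace (2 * (a + k)) with (s + 2 * k) by lia.
      replace (2 * (a + r + k)) with (s + p + 2 * k) by lia.
      apply H. lia.
    + apply (IH r ltac:(lia) a ltac:(lia)). intros k Hk.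
      rewrite <- (Bool.negb_involutive (t (a + k))), <- (Bool.negb_involutive (t (a + r + k))).
      rewrite <- (t_odd (a + k)), <- (t_odd (a + r + k)) by lia.
      replace (2 * (a + k) + 1) with (s + 2 * k) by lia.
      replace (2 * (a + r + k) + 1) with (s + p + 2 * k) by lia.
      rewrite H by lia. reflexivity.
  - exact (OF_odd s p Hs ltac:(lia) Ho H).
Qed.

Lemma L1 : forall (m : nat) a z, 0 <= a -> 0 <= z < 2 ^ Z.of_nat m ->
  t (a * 2 ^ Z.of_nat m + z) = xorb (t a) (t z).
Proof.
  induction m as [|m IH]; intros a z Ha Hz.
  - simpl in *. replace z with 0 by lia. rewrite Z.mul_1_r, Z.add_0_r.
    simpl. destruct (t a); reflexivity.
  - rewrite Nat2Z.inj_succ, Z.pow_succ_r in * by lia.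
    destruct (Z.Even_or_Odd z) as [[w ->] | [w ->]].
    + replace (a * (2 * 2 ^ Z.of_nat m) + 2 * w) with (2 * (a * 2 ^ Z.of_nat m + w)) by ring.
      rewrite !t_even. apply IH; lia.
    + replace (a * (2 * 2 ^ Z.of_nat m) + (2 * w + 1)) with (2 * (a * 2 ^ Z.of_nat m + w) + 1) by ring.
      assert (0 <= 2 ^ Z.of_nat m) by lia.
      rewrite !t_odd by nia. rewrite IH by lia. destruct (t a), (t w); reflexivity.
Qed.

Definition E (K : nat) : Z := 2 ^ Z.of_nat (2 * K).

Lemma E_S K : E (S K) = 4 * E K.
Proof. unfold E. replace (2 * S K)%nat with (S (S (2 * K))) by lia.
  rewrite !Nat2Z.inj_succ, !Z.pow_succ_r by lia. ring. Qed.

Lemma E_ge K : Z.of_nat K + 1 <= E K.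
Proof. induction K. reflexivity. rewrite E_S. lia. Qed.

Lemma consist K z : Z.abs z < E K -> t (z + E (S K)) = t (z + E K).
Proof.
  intros Hz. pose proof (E_ge K). rewrite E_S.
  destruct (Z_le_gt_dec 0 z).
  - replace (z + 4 * E K) with (4 * E K + z) by ring.
    replace (z + E K) with (1 * E K + z) by ring.
    unfold E in *. rewrite !L1 by lia. reflexivity.
  - replace (z + 4 * E K) with (3 * E K + (z + E K)) by ring.
    unfold E in *. rewrite L1 by lia. reflexivity.
Qed.

Definition g (z : Z) : bool := t (z + E (Z.abs_nat z)).

Lemma g_eq z K : (Z.abs_nat z <= K)%nat -> g z = t (z + E K).
Proof.
  intros H. unfold g. induction H; [reflexivity|].
  rewrite consist; [exact IHle|]. pose proof (E_ge m).
  rewrite <- Zabs2Nat.id_abs in *. lia.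
Qed.

Lemma g_OF s p : 1 <= p -> (forall i, 0 <= i <= p -> g (s + i) = g (s + p + i)) -> False.
Proof.
  intros Hp H. set (K := (Z.abs_nat s + Z.abs_nat (2 * p))%nat).
  pose proof (E_ge K).
  assert (HK : forall z, s <= z <= s + 2 * p -> g z = t (z + E K)).
  { intros z Hz. apply g_eq. apply Nat2Z.inj_le. subst K.
    rewrite Nat2Z.inj_add, !Zabs2Nat.id_abs. lia. }
  apply (OF_nat (Z.to_nat p) p ltac:(lia) (s + E K)).
  - subst K. rewrite Nat2Z.inj_add, !Zabs2Nat.id_abs in *. lia.
  - intros i Hi.
    replace (s + E K + i) with ((s + i) + E K) by ring.
    replace (s + E K + p + i) with ((s + p + i) + E K) by ring.
    rewrite <- !HK by lia. apply H; lia.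
Qed.

Theorem theorem2 : exists f : Z -> Z -> bool, frameless f.
Proof.
  exists (fun x y => g (x + y)). intros [m [n [p [q [Hp [Hq [Hc Hr]]]]]]].
  destruct (Z_le_gt_dec p q).
  - apply (g_OF (m + n) p Hp). intros i Hi.
    specialize (Hc i ltac:(lia)).
    replace (m + n + i) with (m + (n + i)) by ring.
    replace (m + n + p + i) with (m + p + (n + i)) by ring. exact Hc.
  - apply (g_OF (m + n) q Hq). intros i Hi.
    specialize (Hr i ltac:(lia)).
    replace (m + n + i) with (m + i + n) by ring.
    replace (m + n + q + i) with (m + i + (n + q)) by ring. exact Hr.
Qed.
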